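(* Let $P$ be a poset, let $\alpha\ge2$ be a cardinal, and let $\mathcal{U}$ be a join-specification for $P$ with $\mathcal{U}\subseteq\mathcal{U}_\alpha\subseteq\mathcal{U}^+$. Suppose that for all $p\in P$ and $T\in\mathcal{U}$, whenever $p\wedge\bigvee T$ is defined in $P$, the join $\bigvee_{t\in T}(p\wedge t)$ is also defined in $P$ and $p\wedge\bigvee T=\bigvee_{t\in T}(p\wedge t)$. Then $\mathcal{I}_{\mathcal{U}}$ is a frame.
   Context: A join-specification for $P$ is a set $\mathcal{U}\subseteq\wp(P)$ such that $\bigvee S$ exists in $P$ for every $S\in\mathcal{U}$ and $\{p\}\in\mathcal{U}$ for every $p\in P$. A $\mathcal{U}$-ideal is a down-closed $C\subseteq P$ with $\bigvee S\in C$ whenever $S\in\mathcal{U}$, $S\subseteq C$; $\mathcal{I}_{\mathcal{U}}$ is the complete lattice of $\mathcal{U}$-ideals under inclusion; $\Gamma_{\mathcal{U}}(S)$ is the smallest $\mathcal{U}$-ideal containing $S$. $\mathcal{U}^+=\{S\subseteq P:\bigvee S\text{ exists and }\bigvee S\in\Gamma_{\mathcal{U}}(S)\}$. $\mathcal{U}_\alpha=\{S\subseteq P:S\neq\emptyset,\ |S|<\alpha,\ \bigvee S\text{ exists in }P\}$. *)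

(* Defs.v *)
From mathcomp Require Import all_boot all_order.
Set Implicit Arguments. Unset Strict Implicit. Unset Printing Implicit Defensive.
Import Order.Theory.
Local Open Scope order_scope.

Definition pset (T : Type) := T -> Prop.
Definition psubset {T} (A B : pset T) := forall x, A x -> B x.

Section PosetDefs.
Context {d : Order.disp_t} {P : porderType d}.

Definition is_join (S : pset P) (x : P) :=
  (forall s, S s -> s <= x) /\ (forall u, (forall s, S s -> s <= u) -> x <= u).

Definition is_meet2 (p q x : P) :=
  (x <= p /\ x <= q) /\ (forall l, l <= p -> l <= q -> l <= x).

Definition join_spec (U : pset (pset P)) :=
  (forall S, U S -> exists x, is_join S x) /\
  (forall p : P, U (fun q => q = p)).

Definition U_ideal (U : pset (pset P)) (C : pset P) :=
  (forall x y, y <= x -> C x -> C y) /\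
  (forall S x, U S -> psubset S C -> is_join S x -> C x).

Definition Gamma (U : pset (pset P)) (S : pset P) : pset P :=
  fun x => forall C, U_ideal U C -> psubset S C -> C x.

Definition Uplus (U : pset (pset P)) : pset (pset P) :=
  fun S => exists x, is_join S x /\ Gamma U S x.

End PosetDefs.

(* cardinals are represented by types: |S| < |A| *)
Definition card_lt {T A : Type} (S : pset T) :=
  (exists f : {x | S x} -> A, injective f) /\
  ~ (exists g : A -> {x | S x}, injective g).

(* U_alpha, with alpha = |A| *)
Definition U_alpha {d : Order.disp_t} {P : porderType d} (A : Type)
    : pset (pset P) :=
  fun S => (exists s, S s) /\ @card_lt P A S /\ exists x, is_join S x.

Section Frames.
Context {T : Type}.
Definition is_lub_in (X : pset (pset T)) (F : pset (pset T)) (s : pset T) :=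
  X s /\ (forall D, F D -> psubset D s) /\
  (forall u, X u -> (forall D, F D -> psubset D u) -> psubset s u).
Definition is_glb_in (X : pset (pset T)) (F : pset (pset T)) (s : pset T) :=
  X s /\ (forall D, F D -> psubset s D) /\
  (forall u, X u -> (forall D, F D -> psubset u D) -> psubset u s).
Definition complete_lattice_in (X : pset (pset T)) :=
  forall F, psubset F X -> exists s, is_lub_in X F s.
Definition is_frame (X : pset (pset T)) :=
  complete_lattice_in X /\
  forall a F s m, X a -> psubset F X -> is_lub_in X F s ->
    is_glb_in X (fun E => E = a \/ E = s) m ->
    is_lub_in X
      (fun m' => exists D, F D /\ is_glb_in X (fun E => E = a \/ E = D) m') m.
End Frames.

Definition I_U {d : Order.disp_t} {P : porderType d} (U : pset (pset P))
  : pset (pset P) := U_ideal U.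

(* Main.v *)
Require Import Defs.
From mathcomp Require Import all_boot all_order.
From Stdlib Require Import ClassicalEpsilon ProofIrrelevance.
Local Open Scope order_scope.
Import Order.Theory.

Lemma card_img {T A : Type} (S S' : pset T) (R : T -> T -> Prop) :
  (forall t x x', R t x -> R t x' -> x = x') ->
  (forall s', S' s' -> exists t, S t /\ R t s') ->
  @card_lt T A S -> @card_lt T A S'.
Proof.
move=> Rf Hex [[f finj] nog].
have h : forall z : {x | S' x}, {t | S t /\ R t (proj1_sig z)}.
  move=> z; apply: constructive_indefinite_description; exact: Hex (proj2_sig z).
pose k := fun z : {x | S' x} => exist S (proj1_sig (h z)) (proj1 (proj2_sig (h z))).
have kinj : injective k.
  move=> [z1 p1] [z2 p2] /(f_equal (@proj1_sig _ _)) /= E.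
  have e : z1 = z2.
    have H1 := proj2 (proj2_sig (h (exist _ z1 p1))).
    have H2 := proj2 (proj2_sig (h (exist _ z2 p2))).
    rewrite E in H1; exact: Rf H1 H2.
  subst z2; by rewrite (proof_irrelevance _ p1 p2).
split.
  exists (fun z => f (k z)) => z1 z2 /finj; exact: kinj.
move=> [g ginj]; apply: nog; exists (fun a => k (g a)) => a1 a2 /kinj; exact: ginj.
Qed.

Section Main.
Context {d : Order.disp_t} {P : porderType d}.

Lemma meet_uniq (p t x x' : P) : is_meet2 p t x -> is_meet2 p t x' -> x = x'.
Proof.
move=> [[h1 h2] h3] [[h1' h2'] h3']; apply: le_anti.
by rewrite (h3' _ h1 h2) (h3 _ h1' h2').
Qed.

Lemma join_uniq (S : pset P) x x' : is_join S x -> is_join S x' -> x = x'.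
Proof.
move=> [h1 h2] [h1' h2']; apply: le_anti.
by rewrite (h2 _ h1') (h2' _ h1).
Qed.

Lemma Gamma_ideal (U : pset (pset P)) S : U_ideal U (Gamma U S).
Proof.
split.
  move=> x y yx Gx C HC SC; have [dc _] := HC; exact: dc x y yx (Gx C HC SC).
move=> T x UT TG Jx C HC SC; have [dc jc] := HC.
apply: jc UT _ Jx => t Tt; exact: TG t Tt C HC SC.
Qed.

Lemma inter_ideal (U : pset (pset P)) C D :
  U_ideal U C -> U_ideal U D -> U_ideal U (fun x => C x /\ D x).
Proof.
move=> [dc jc] [dd jd]; split.
  move=> x y yx [Cx Dx]; split; [exact: dc x y yx Cx | exact: dd x y yx Dx].
move=> S x US SCD Jx; split.
  apply: jc US _ Jx => s Ss; exact: (SCD s Ss).1.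
apply: jd US _ Jx => s Ss; exact: (SCD s Ss).2.
Qed.

End Main.

Theorem lemma3p13 (d : Order.disp_t) (P : porderType d) (A : Type)
  (U : pset (pset P)) :
  (exists a b : A, a <> b) ->
  join_spec U ->
  psubset U (U_alpha A) ->
  psubset (U_alpha A) (Uplus U) ->
  (forall (p : P) (T : pset P) (j m : P), U T -> is_join T j ->
     is_meet2 p j m ->
     (forall t, T t -> exists mt, is_meet2 p t mt) /\
     is_join (fun x => exists t, T t /\ is_meet2 p t x) m) ->
  is_frame (I_U U).
Proof.
move=> _ _ UUa UaUp Hdist; split.
  move=> F FX; exists (Gamma U (fun x => exists D, F D /\ D x)); split.
    exact: Gamma_ideal.
  split.
    move=> D FD x Dx C HC SC; apply: SC; by exists D.
  move=> u Xu Hu x Gx; apply: (Gx u Xu) => y [D [FD Dy]]; exact: Hu D FD y Dy.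
move=> a F s m Xa FX [Xs [Fs sl]] [Xm [mlb mgr]].
have ma : psubset m a by apply: mlb; left.
have ms : psubset m s by apply: mlb; right.
split; first exact: Xm.
split.
  move=> m' [D [FD [Xm' [m'lb _]]]].
  apply: (mgr m' Xm') => E [->|->].
    by apply: m'lb; left.
  move=> x m'x; apply: (Fs D FD); exact: m'lb D (or_intror erefl) x m'x.
move=> u Xu Hu.
pose C := fun x : P => forall y, y <= x -> a y -> u y.
have [dca jca] := Xa.
have [dcu jcu] := Xu.
have XC : I_U U C.
  split.
    move=> x y yx Cx z zy az; apply: Cx az; exact: le_trans zy yx.
  move=> S x US SC Jx y yx ay.
  have mxy : is_meet2 y x y.
    split; first by split.
    by move=> l ly _.
  have [ex Jy] := Hdist y S x y US Jx mxy.
  pose S' := fun z => exists t, S t /\ is_meet2 y t z.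
  have S'u : psubset S' u.
    move=> z [t [St [[zy zt] _]]].
    apply: (SC t St z zt); exact: dca y z zy ay.
  have [[s0 Ss0] [cS _]] := UUa S US.
  have UaS' : U_alpha A S'.
    split.
      have [mt Hmt] := ex s0 Ss0; by exists mt, s0.
    split; last by exists y.
    apply: (@card_img P A S S' (fun t z => is_meet2 y t z)) cS.
      move=> t z z'; move=> H1 H2; exact: (meet_uniq _ _ _ _ H1 H2).
    done.
  have [y' [Jy' Gy']] := UaUp S' UaS'.
  rewrite (join_uniq _ _ _ Jy Jy'); exact: Gy' u Xu S'u.
have sC : psubset s C.
  apply: (sl C XC) => D FD x Dx y yx ay.
  have [dD jD] := FX D FD.
  have ad : U_ideal U (fun z => a z /\ D z).
    exact: (inter_ideal _ _ _ (conj dca jca) (conj dD jD)).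
  apply: (Hu (fun z => a z /\ D z)).
    exists D; split=> //; split; first exact: ad.
    split.
      by move=> E [->|->] z [].
    move=> v _ Hv z vz; split; [exact: Hv a (or_introl erefl) z vz|exact: Hv D (or_intror erefl) z vz].
  split=> //; exact: dD x y yx Dx.
move=> x mx; apply: (sC x (ms x mx) x (lexx x)); exact: ma x mx.
Qed.
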